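(* Let $\mathbf{S} = [s_{ij}] \in \mathbb{R}^{m_q \times m}$ be the similarity matrix between a query vector set $\mathbf{Q}=\{\mathbf{q}_1,\dots,\mathbf{q}_{m_q}\}$ and a target vector set $\mathbf{T}=\{\mathbf{t}_1,\dots,\mathbf{t}_m\}$, with entries $s_{ij}\in[0,1]$, and let $s_{\max} = \max_{i,j} s_{ij}$. Let $\hat{\mathbf{S}} = [\hat S_{ij}]$ be the estimated similarity matrix obtained from $L \in \mathbb{Z}^+$ hash functions of a locality-sensitive hashing family (so that each estimated entry $\hat S_{ij}$ is distributed as $L^{-1}\mathcal{B}(s_{ij}, L)$, i.e. $L\hat S_{ij}$ is binomial with $L$ trials and success probability $s_{ij}$). Let $\tau_1 \in (s_{\max}, 1)$ and $\Delta_1 = \tau_1 - s_{\max}$. Then $$\Pr\big[\sigma(\hat{\mathbf{S}}) \geq s_{\max} + \Delta_1\big] \leq m_q m\, \gamma^L, \qquad \text{where } \gamma = \left(\frac{s_{\max}(1-\tau_1)}{\tau_1(1-s_{\max})}\right)^{\tau_1}\left(\frac{1-s_{\max}}{1-\tau_1}\right),$$ and $\sigma(\mathbf{A}) = \min\big(\min_i \max_j a_{ij}, \min_j \max_i a_{ij}\big)$ for a matrix $\mathbf{A}=[a_{ij}] \in \mathbb{R}^{m_q\times m}$.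
   Context: A locality-sensitive hash function $h$ satisfies $\Pr(h(\mathbf{a})=h(\mathbf{b})) = \operatorname{sim}(\mathbf{a},\mathbf{b}) \in [0,1]$. With $L$ such hash functions, the estimated similarity of a pair of vectors is the fraction of the $L$ hash functions on which they collide, hence a scaled binomial $L^{-1}\mathcal{B}(\operatorname{sim}, L)$. Vectors are $L2$-normalized and $\operatorname{sim}(\mathbf{q},\mathbf{v}) = \mathbf{q}^T\mathbf{v}$. *)

(* Defs.v *)
From HB Require Import structures.
From mathcomp Require Import all_boot all_order all_algebra.
From mathcomp Require Import all_classical all_reals all_analysis.
Set Implicit Arguments. Unset Strict Implicit. Unset Printing Implicit Defensive.
Import Order.TTheory GRing.Theory Num.Theory.
Local Open Scope ring_scope.

(* Maximum / minimum of a real-valued function over a finite type.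
   For a nonempty index type this is the genuine max / min (the seed
   value is f applied to the first element, which is idempotent). *)
Definition fmax {R : realType} (I : finType) (f : I -> R) : R :=
  \big[Num.max/head 0 (map f (enum I))]_(i : I) f i.
Definition fmin {R : realType} (I : finType) (f : I -> R) : R :=
  \big[Num.min/head 0 (map f (enum I))]_(i : I) f i.

Definition sigma {R : realType} (mq m : nat) (A : 'M[R]_(mq, m)) : R :=
  Num.min (fmin (fun i : 'I_mq => fmax (fun j : 'I_m => A i j)))
          (fmin (fun j : 'I_m => fmax (fun i : 'I_mq => A i j))).

Definition smax {R : realType} (mq m : nat) (S : 'M[R]_(mq, m)) : R :=
  fmax (fun ij : 'I_mq * 'I_m => S ij.1 ij.2).

(* Main.v *)
Require Import Defs.
From HB Require Import structures.
From mathcomp Require Import all_boot all_order all_algebra.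
From mathcomp Require Import all_classical all_reals all_analysis.
From mathcomp Require Import ring lra.
Import Order.TTheory GRing.Theory Num.Theory.
Local Open Scope ring_scope.
Local Open Scope classical_set_scope.
Lemma tail_bound (R : realType) (L : nat) (p s tau : R) :
  (0 < L)%N -> 0 <= p -> p <= s -> s < tau -> tau < 1 ->
  (binomial_prob L p [set n : nat | (tau <= n%:R / L%:R)%R] <=
   ((((s * (1 - tau)) / (tau * (1 - s))) `^ tau * ((1 - s) / (1 - tau))) ^+ L)%:E)%E.
Proof.
move=> L0 p0 ps st t1.
have p1 : p <= 1 by lra.
have Lpos : (0 : R) < L%:R by rewrite ltr0n.
rewrite (@binomial_probE R L p p0 p1).
have [s0|sgt0] := eqVneq s 0.
  have pe : p = 0 by lra.
  rewrite s0 !mul0r powR0 ?mul0r ?expr0n; last by apply/negbT/eqP; lra.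
  rewrite gt_eqF //.
  rewrite big1 // => k _ /=; rewrite diracE.
  case: (boolP (_ \in _)) => [|_]; last by rewrite mule0.
  rewrite inE /= => hk.
  have k0 : (0 < k)%N.
    rewrite lt0n; apply/eqP => k0; move: hk; rewrite k0 mul0r; lra.
  by rewrite pe expr0n gtn_eqF // !mul0r mul0rn mul0e.
have s0 : 0 < s by rewrite lt_neqAle eq_sym sgt0 /=; lra.
set y := (s * (1 - tau)) / (tau * (1 - s)).
have y0 : 0 < y by rewrite /y divr_gt0 // mulr_gt0 //; lra.
have y1 : y <= 1.
  rewrite /y ler_pdivrMr ?mul1r; last by rewrite mulr_gt0 //; lra.
  nra.
set l := ln y.
have l0 : l <= 0 by exact: ln_le0.
set x := expR (- l).
have xE : x = y^-1 by rewrite /x expRN /l lnK.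
have x1 : 1 <= x by rewrite /x -[leLHS]expR0 ler_expR; lra.
have cE : (1 - s) / (1 - tau) = 1 - s + s * x.
  rewrite xE /y; field; rewrite sgt0 andbT; apply/and3P; split; apply/eqP => h; lra.
have zE : y `^ tau = expR (tau * l) by rewrite /powR gt_eqF.
rewrite zE cE.
apply: (@le_trans _ _ (\sum_(k < L.+1)
   ((p ^+ k * (1 - p) ^+ (L - k) *+ 'C(L, k)) * (expR (tau * l) ^+ L * x ^+ k))%:E)%E).
  apply: lee_sum => k _ /=; rewrite diracE.
  have b0 : 0 <= p ^+ k * (1 - p) ^+ (L - k) *+ 'C(L, k).
    by rewrite mulrn_wge0 // mulr_ge0 // exprn_ge0 //; lra.
  case: (boolP (_ \in _)) => [|_]; last first.
    rewrite mule0 lee_fin mulr_ge0 // mulr_ge0 // exprn_ge0 // ?expR_ge0 //; lra.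
  rewrite inE /= => hk; rewrite mule1 lee_fin -[X in X <= _]mulr1 ler_wpM2l //.
  rewrite /x -!expRM_natl -expRD.
  have hk' : tau * L%:R <= k%:R by rewrite -ler_pdivlMr.
  apply: (le_trans _ (expR_ge1Dx _)); rewrite lerDl.
  have h : 0 <= (k%:R - tau * L%:R) * (- l) by apply: mulr_ge0; lra.
  by move: h; rewrite mulrBl; lra.
rewrite sumEFin lee_fin.
rewrite (_ : \sum_(k < L.+1) _ = expR (tau * l) ^+ L * (1 - p + p * x) ^+ L); last first.
  rewrite [X in _ = _ * X]exprDn mulr_sumr; apply: eq_bigr => k _.
  rewrite exprMn mulrnAl mulrnAr; congr (_ *+ _).
  move: (p ^+ k) ((1 - p) ^+ (L - k)) (x ^+ k) (expR (tau * l) ^+ L).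
  by move=> a b c e; ring.
have h1 : p * (x - 1) <= s * (x - 1) by apply: ler_wpM2r; lra.
have h2 : 0 <= p * (x - 1) by apply: mulr_ge0; lra.
have h3 : 0 <= s * (x - 1) by apply: mulr_ge0; lra.
rewrite exprMn ler_wpM2l ?exprn_ge0 ?expR_ge0 // lerXn2r // ?nnegrE; lra.
Qed.

Lemma fmax_ge (R : realType) (I : finType) (f : I -> R) i : f i <= fmax f.
Proof. by rewrite /fmax (bigD1 i) //= le_max lexx. Qed.

Lemma fmin_le (R : realType) (I : finType) (f : I -> R) i : fmin f <= f i.
Proof. by rewrite /fmin (bigD1 i) //= ge_min lexx. Qed.

Lemma fmax_ex (R : realType) (I : finType) (f : I -> R) (i0 : I) :
  exists i, fmax f = f i.
Proof.
rewrite /fmax; apply: (big_ind (fun x => exists i, x = f i)).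
- have : i0 \in enum I by rewrite mem_enum.
  by case: (enum I) => [//|a r] _ /=; exists a.
- move=> a b [i ->] [j ->]; rewrite maxEle; case: ifP => _; eauto.
- by move=> i _; exists i.
Qed.

Section meas.
Context d (T : measurableType d) (R : realType).

Lemma mbig (op : R -> R -> R)
  (hop : forall f g : T -> R, measurable_fun setT f -> measurable_fun setT g ->
     measurable_fun setT (fun w => op (f w) (g w)))
  (I : Type) (r : seq I) (F : I -> T -> R) (x0 : T -> R) :
  measurable_fun setT x0 -> (forall i, measurable_fun setT (F i)) ->
  measurable_fun setT (fun w => \big[op/x0 w]_(i <- r) F i w).
Proof.
move=> m0 mF; elim: r => [|a r IH].
  by apply: (eq_measurable_fun x0) => // w _; rewrite big_nil.
apply: (eq_measurable_fun (fun w => op (F a w) (\big[op/x0 w]_(i <- r) F i w))).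
  by move=> w _; rewrite big_cons.
exact: hop.
Qed.

Lemma mfmax (I : finType) (F : I -> T -> R) :
  (forall i, measurable_fun setT (F i)) ->
  measurable_fun setT (fun w => fmax (fun i => F i w)).
Proof.
move=> mF; rewrite /fmax; apply: mbig => //.
- by move=> f g mf mg; exact: measurable_realfun.measurable_maxr.
- by case: (enum I) => [|a r] /=.
Qed.

Lemma mfmin (I : finType) (F : I -> T -> R) :
  (forall i, measurable_fun setT (F i)) ->
  measurable_fun setT (fun w => fmin (fun i => F i w)).
Proof.
move=> mF; rewrite /fmin; apply: mbig => //.
- by move=> f g mf mg; exact: measurable_realfun.measurable_minr.
- by case: (enum I) => [|a r] /=.
Qed.
End meas.

Theorem lemma2 (R : realType) (d : measure_display) (T : measurableType d)
  (P : probability T R) (mq m L : nat) (S : 'M[R]_(mq, m))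
  (K : 'I_mq -> 'I_m -> {RV P >-> nat}) (tau1 : R) :
  (0 < mq)%N -> (0 < m)%N -> (0 < L)%N ->
  (forall i j, 0 <= S i j <= 1) ->
  (forall i j (U : set nat), measurable U ->
     distribution P (K i j) U = binomial_prob L (S i j) U) ->
  smax S < tau1 < 1 ->
  let s := smax S in
  let Delta1 := tau1 - s in
  let gamma := ((s * (1 - tau1)) / (tau1 * (1 - s))) `^ tau1 *
               ((1 - s) / (1 - tau1)) in
  (P [set w | (s + Delta1 <=
              sigma (\matrix_(i, j) ((K i j w)%:R / L%:R) : 'M[R]_(mq, m)))%R]
   <= ((mq * m)%:R * gamma ^+ L)%:E)%E.
Proof.
move=> mq0 m0 L0 S01 Kd /andP[st t1]; cbv zeta.
set s := smax S. set Delta1 := tau1 - s.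
set gamma := (s * (1 - tau1) / (tau1 * (1 - s))) `^ tau1 * ((1 - s) / (1 - tau1)).
pose i0 : 'I_mq := Ordinal mq0.
pose j0 : 'I_m := Ordinal m0.
have Ss i j : S i j <= s := @fmax_ge R _ (fun ij : 'I_mq * 'I_m => S ij.1 ij.2) (i, j).
have s0 : 0 <= s by apply: le_trans (Ss i0 j0); case/andP: (S01 i0 j0).
have cE : s + Delta1 = tau1 by rewrite /Delta1 addrC subrK.
set U := [set n : nat | (tau1 <= n%:R / L%:R)%R].
pose F := fun k : nat => K i0 (insubd j0 k) @^-1` U.
set E := [set w | _].
pose g := fun w => sigma (\matrix_(i, j) ((K i j w)%:R / L%:R) : 'M[R]_(mq, m)).
have mg : measurable_fun setT g.
  rewrite /g /sigma; apply: measurable_realfun.measurable_minr.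
  - apply: mfmin => i; apply: mfmax => j.
    rewrite (_ : (fun w => _) = (fun w => (K i j w)%:R / L%:R)); last first.
      by apply/funext => w; rewrite mxE.
    apply: (@measurableT_comp _ _ _ _ _ _ (fun n : nat => n%:R / L%:R : R)) => //.
  - apply: mfmin => j; apply: mfmax => i.
    rewrite (_ : (fun w => _) = (fun w => (K i j w)%:R / L%:R)); last first.
      by apply/funext => w; rewrite mxE.
    apply: (@measurableT_comp _ _ _ _ _ _ (fun n : nat => n%:R / L%:R : R)) => //.
have mE : measurable E.
  have := mg measurableT _ (measurable_itv (Interval (BLeft (s + Delta1)) (BInfty _ false))).
  rewrite setTI; congr measurable; apply/seteqP; split => w /=;
    by rewrite in_itv /= andbT.
have sub : E `<=` \big[setU/set0]_(k < m) F k.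
  move=> w; rewrite /E /= cE => hw.
  have [j hj] := @fmax_ex R _ (fun j => (\matrix_(i, j) ((K i j w)%:R / L%:R) : 'M[R]_(mq, m)) i0 j) j0.
  rewrite -bigcup_mkord; exists (val j); first by rewrite /= ltn_ord.
  rewrite /F /= valKd /U /=.
  rewrite mxE in hj; rewrite -hj; apply: (le_trans hw).
  rewrite /sigma ge_min; apply/orP; left.
  exact: (@fmin_le R _ (fun i => fmax _) i0).
apply: (le_trans (content_subadditive P _ mE sub)).
  by move=> k _; apply: measurable_funPTI.
apply: (@le_trans _ _ (\sum_(k < m) (gamma ^+ L)%:E)%E).
  apply: lee_sum => k _.
  rewrite /F.
  change (distribution P (K i0 (insubd j0 k)) U <= (gamma ^+ L)%:E)%E.
  rewrite Kd //.
  case/andP: (S01 i0 (insubd j0 k)) => h0 _.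
  exact: (@tail_bound R L _ s tau1 L0 h0 (Ss _ _) st t1).
rewrite sumEFin lee_fin sumr_const card_ord -[X in X <= _]mulr_natl.
have g0 : 0 <= gamma.
  have a1 : 0 <= 1 - s by rewrite subr_ge0; apply: ltW; apply: (lt_trans st t1).
  have a2 : 0 <= 1 - tau1 by rewrite subr_ge0; apply: ltW.
  by rewrite /gamma mulr_ge0 ?powR_ge0 // divr_ge0.
apply: ler_wpM2r; first exact: exprn_ge0.
by rewrite ler_nat leq_pmull.
Qed.
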